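(* In the Uniform Price Auction, for every value profile and every agent $i$, the payment satisfies $\pi_i\le B_i$.
   Context: Uniform Price Auction: one unit of a divisible good, $n$ agents with values per unit $v_i>0$ and publicly known budgets $B_i>0$. Relabel agents so that $v_1\ge\dots\ge v_n$ and set $v_{n+1}=0$. Let $k\in\{0,\dots,n\}$ be the largest integer with $\sum_{j=1}^kB_j\le v_k$ (the empty sum is $0$, and $k=0$ is always admissible). Case I: if $\sum_{j=1}^kB_j>v_{k+1}$, allocate $x_i=B_i/\sum_{j=1}^kB_j$ for $i\le k$ and $0$ to everyone else. Case II: if $\sum_{j=1}^kB_j\le v_{k+1}$, allocate $x_i=B_i/v_{k+1}$ for $i\le k$, $x_{k+1}=1-\sum_{j=1}^kx_j$, and $0$ to everyone else. Payments are given by Myerson's formula $\pi_i(v)=v_ix_i(v)-\int_0^{v_i}x_i(u,v_{-i})\,du$. *)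

(* Defs.v *)
From Stdlib Require Import Reals Lra List Arith.
Import ListNotations.
Open Scope R_scope.

(* Agents are 0, ..., n-1; a value profile is v : nat -> R, budgets B : nat -> R
   (entries at indices >= n are irrelevant). *)

(* Insert agent i into a list of agents sorted by decreasing value, after all
   agents with value >= v i (so ties are broken by original index, since
   agents are inserted in increasing index order). *)
Fixpoint ins (v : nat -> R) (i : nat) (l : list nat) : list nat :=
  match l with
  | nil => [i]
  | j :: l' => if Rlt_dec (v j) (v i) then i :: l else j :: ins v i l'
  end.

(* The relabeling: the list of agents sorted so that v_1 >= ... >= v_n
   (position 0 of the list is the agent relabeled "1"). *)
Definition sorted_agents (n : nat) (v : nat -> R) : list nat :=
  fold_left (fun l i => ins v i l) (seq 0 n) nil.

(* rank of agent i: its position (0-based) in the sorted list;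
   agent i gets new label rank i + 1. *)
Fixpoint pos (i : nat) (l : list nat) : nat :=
  match l with
  | nil => 0
  | j :: l' => if Nat.eqb j i then 0 else S (pos i l')
  end.

Definition rank (n : nat) (v : nat -> R) (i : nat) : nat :=
  pos i (sorted_agents n v).

(* sorted value v_m for m = 1..n, and v_{n+1} = 0 (1-based as in the paper) *)
Definition vsort (n : nat) (v : nat -> R) (m : nat) : R :=
  if andb (1 <=? m)%nat (m <=? n)%nat
  then v (nth (m - 1) (sorted_agents n v) 0%nat) else 0.

Definition Bsum (n : nat) (v B : nat -> R) (k : nat) : R :=
  fold_right Rplus 0 (map B (firstn k (sorted_agents n v))).

Fixpoint kfind (n : nat) (v B : nat -> R) (m : nat) : nat :=
  match m with
  | O => O
  | S m' => if Rle_dec (Bsum n v B (S m')) (vsort n v (S m')) then S m'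
            else kfind n v B m'
  end.

Definition kstar (n : nat) (v B : nat -> R) : nat := kfind n v B n.

Definition alloc (n : nat) (B v : nat -> R) (i : nat) : R :=
  let k := kstar n v B in
  let T := Bsum n v B k in
  let r := rank n v i in
  let w := vsort n v (S k) in
  if Rlt_dec w T then
    (if (r <? k)%nat then B i / T else 0)
  else
    (if (r <? k)%nat then B i / w
     else if Nat.eqb r k then 1 - T / w
     else 0).

Definition upd (v : nat -> R) (i : nat) (u : R) : nat -> R :=
  fun j => if Nat.eqb j i then u else v j.

(* Main.v *)
Require Import Defs.
From Stdlib Require Import Reals Lra Lia List Arith Sorting Permutation.
Import ListNotations.
Open Scope R_scope.


Definition Rel (w : nat -> R) (a b : nat) : Prop := w b < w a \/ (w a = w b /\ (a < b)%nat).

Lemma Rel_trans w a b c : Rel w a b -> Rel w b c -> Rel w a c.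
Proof. unfold Rel; intros [H|[H H']] [G|[G G']]; try (left; lra); right; split; [lra|lia]. Qed.

Lemma Rel_irrefl w a : ~ Rel w a a.
Proof. unfold Rel; intros [H|[_ H]]; [lra|lia]. Qed.

Lemma Rel_asym w a b : Rel w a b -> ~ Rel w b a.
Proof. unfold Rel; intros [H|[H H']] [G|[G G']]; try lra; lia. Qed.

Lemma Rel_total w a b : a <> b -> Rel w a b \/ Rel w b a.
Proof. unfold Rel; intros H. destruct (Rtotal_order (w a) (w b)) as [h|[h|h]].
 right; left; lra. destruct (Nat.lt_gt_cases a b) as [[g|g] _]; [ lia | left; right; auto | right; right; split; auto; lia]. left; left; lra. Qed.

Lemma ins_in w j l x : In x (ins w j l) <-> x = j \/ In x l.
Proof. induction l as [|a l IH]; simpl. split; intros [H|H]; auto.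
 destruct (Rlt_dec (w a) (w j)); simpl. split; intros [H|H]; auto. rewrite IH.
 split; intros; repeat (destruct H as [H|H]); auto. Qed.

Lemma ins_len w j l : length (ins w j l) = S (length l).
Proof. induction l as [|a l IH]; simpl; auto. destruct (Rlt_dec (w a) (w j)); simpl; auto. Qed.

Lemma ins_sorted w j l : StronglySorted (Rel w) l -> (forall x, In x l -> (x < j)%nat) ->
  StronglySorted (Rel w) (ins w j l).
Proof. induction l as [|a l IH]; simpl; intros Hs Hl.
 - constructor; constructor.
 - inversion Hs; subst. destruct (Rlt_dec (w a) (w j)).
   + constructor; auto. constructor. left; auto.
     rewrite Forall_forall in *. intros y Hy. apply Rel_trans with a; auto. left; auto.
   + constructor. apply IH; auto. rewrite Forall_forall in *. intros y Hy.
     apply ins_in in Hy. destruct Hy as [->|Hy]; auto.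
     unfold Rel. destruct (Rle_lt_or_eq_dec _ _ (Rnot_lt_le _ _ n)). left; auto. right; split; auto.
Qed.

Lemma sa_S n w : sorted_agents (S n) w = ins w n (sorted_agents n w).
Proof. unfold sorted_agents. rewrite seq_S, fold_left_app. reflexivity. Qed.

Lemma sa_props n w : StronglySorted (Rel w) (sorted_agents n w) /\
  (forall x, In x (sorted_agents n w) <-> (x < n)%nat) /\ length (sorted_agents n w) = n.
Proof. induction n as [|n [H1 [H2 H3]]].
 - unfold sorted_agents; simpl. split. constructor. split; [intros; split; [tauto|lia]|auto].
 - rewrite sa_S. split; [|split].
   + apply ins_sorted; auto. intros x Hx; apply H2; auto.
   + intros x. rewrite ins_in, H2. lia.
   + rewrite ins_len; lia.
Qed.

Lemma SS_NoDup w l : StronglySorted (Rel w) l -> NoDup l.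
Proof. induction 1; constructor; auto. intros Hin. rewrite Forall_forall in H0.
 apply (Rel_irrefl w a); auto. Qed.

Lemma pos_lt x l : In x l -> (Defs.pos x l < length l)%nat.
Proof. induction l as [|a l IH]; simpl; [tauto|]. destruct (Nat.eqb_spec a x); intros H. lia.
 destruct H; [congruence|]. specialize (IH H); lia. Qed.

Lemma nth_pos x l d : In x l -> nth (Defs.pos x l) l d = x.
Proof. induction l as [|a l IH]; simpl; [tauto|]. destruct (Nat.eqb_spec a x); intros H. auto.
 destruct H; [congruence|]. auto. Qed.

Lemma pos_nth l k d : NoDup l -> (k < length l)%nat -> Defs.pos (nth k l d) l = k.
Proof. revert k; induction l as [|a l IH]; simpl; intros k Hn Hk; [lia|]. inversion Hn; subst.
 destruct k. rewrite Nat.eqb_refl; auto.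
 destruct (Nat.eqb_spec a (nth k l d)). subst. exfalso; apply H1; apply nth_In; lia.
 rewrite IH; auto; lia. Qed.

Lemma pos_app x l1 l2 : In x l1 -> Defs.pos x (l1 ++ l2) = Defs.pos x l1.
Proof. induction l1 as [|a l IH]; simpl; [tauto|]. destruct (Nat.eqb_spec a x); intros H; auto.
 destruct H; [congruence|]. rewrite IH; auto. Qed.

Lemma SS_nth (R : nat -> nat -> Prop) l a b (d : nat) : StronglySorted R l -> (a < b)%nat -> (b < length l)%nat -> R (nth a l d) (nth b l d).
Proof. intros H; revert a b; induction H as [|x l Hs IH Hf]; simpl; intros p q Hab Hb; [lia|].
 destruct p, q; try lia. rewrite Forall_forall in Hf. apply Hf, nth_In; lia.
 apply IH; lia. Qed.

Lemma SS_unique w l1 l2 : StronglySorted (Rel w) l1 -> StronglySorted (Rel w) l2 ->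
  (forall x, In x l1 <-> In x l2) -> l1 = l2.
Proof. revert l2; induction l1 as [|a l1 IH]; intros l2 H1 H2 He.
 - destruct l2 as [|b l2]; auto. exfalso; apply (proj2 (He b)); simpl; auto.
 - destruct l2 as [|b l2]. exfalso; apply (proj1 (He a)); simpl; auto.
   inversion H1; inversion H2; subst. rewrite Forall_forall in *.
   assert (a = b).
   { destruct (Nat.eq_dec a b); auto. exfalso.
     assert (Ha : In a l2). { destruct (proj1 (He a) (or_introl eq_refl)); auto; congruence. }
     assert (Hb : In b l1). { destruct (proj2 (He b) (or_introl eq_refl)); auto; congruence. }
     apply (Rel_asym w a b); auto. }
   subst b. f_equal. apply IH; auto. intros x; split; intros Hx.
   + destruct (proj1 (He x) (or_intror Hx)) as [E|E]; auto. subst x. exfalso; apply (Rel_irrefl w a); auto.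
   + destruct (proj2 (He x) (or_intror Hx)) as [E|E]; auto. subst x. exfalso; apply (Rel_irrefl w a); auto.
Qed.

Definition sumB (B : nat -> R) (l : list nat) : R := fold_right Rplus 0 (map B l).

Lemma sumB_perm B l1 l2 : Permutation l1 l2 -> sumB B l1 = sumB B l2.
Proof. unfold sumB; induction 1; simpl; lra. Qed.

Lemma sumB_app B l1 l2 : sumB B (l1 ++ l2) = sumB B l1 + sumB B l2.
Proof. unfold sumB; rewrite map_app. induction l1; simpl. lra. rewrite IHl1. lra. Qed.

Lemma sumB_nonneg B l : (forall x, In x l -> 0 <= B x) -> 0 <= sumB B l.
Proof. unfold sumB; induction l; simpl; intros H. lra. assert (0 <= B a) by auto.
 assert (0 <= fold_right Rplus 0 (map B l)) by auto. lra. Qed.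

Lemma sumB_ge B l x : (forall y, In y l -> 0 <= B y) -> In x l -> B x <= sumB B l.
Proof. unfold sumB; induction l; simpl; intros H Hx. tauto.
 assert (0 <= B a) by auto. assert (0 <= fold_right Rplus 0 (map B l)) by (apply sumB_nonneg; auto).
 destruct Hx. subst; lra. assert (B x <= fold_right Rplus 0 (map B l)) by auto. lra. Qed.

Lemma Bsum_eq n v B k : Bsum n v B k = sumB B (firstn k (sorted_agents n v)).
Proof. reflexivity. Qed.

Lemma kfind_le n v B m : (kfind n v B m <= m)%nat.
Proof. induction m; simpl; auto. destruct (Rle_dec _ _); lia. Qed.

Lemma kfind_fail n v B m j : (kfind n v B m < j <= m)%nat -> ~ (Bsum n v B j <= vsort n v j).
Proof. induction m; simpl; intros H. lia.
 destruct (Rle_dec _ _). lia. destruct (Nat.eq_dec j (S m)). subst; auto. apply IHm; lia. Qed.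

Lemma kfind_ok n v B m : kfind n v B m = 0%nat \/ Bsum n v B (kfind n v B m) <= vsort n v (kfind n v B m).
Proof. induction m; simpl; auto. destruct (Rle_dec _ _); auto. Qed.

Lemma kfind_char n v B m k : (k <= m)%nat -> (k = 0%nat \/ Bsum n v B k <= vsort n v k) ->
  (forall j, (k < j <= m)%nat -> ~ (Bsum n v B j <= vsort n v j)) -> kfind n v B m = k.
Proof. induction m; simpl; intros H1 H2 H3. lia.
 destruct (Rle_dec _ _).
 - destruct (Nat.eq_dec k (S m)); auto. exfalso; apply (H3 (S m)); auto; lia.
 - destruct (Nat.eq_dec k (S m)). subst. destruct H2; [lia|tauto]. apply IHm; auto; try lia.
   intros j Hj; apply H3; lia. Qed.

Lemma pos_app2 x l1 l2 : ~ In x l1 -> Defs.pos x (l1 ++ l2) = (length l1 + Defs.pos x l2)%nat.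
Proof. induction l1 as [|a l IH]; simpl; auto. destruct (Nat.eqb_spec a x); intros H.
 exfalso; auto. rewrite IH; auto. Qed.

Lemma SS_app (R : nat -> nat -> Prop) l1 l2 : StronglySorted R l1 -> StronglySorted R l2 ->
  (forall x y, In x l1 -> In y l2 -> R x y) -> StronglySorted R (l1 ++ l2).
Proof. induction l1 as [|a l IH]; simpl; intros H1 H2 H3; auto. inversion H1; subst.
 constructor. apply IH; auto. rewrite Forall_forall in *. intros y Hy. apply in_app_or in Hy.
 destruct Hy; auto. Qed.

Lemma SS_app_inv (R : nat -> nat -> Prop) l1 l2 : StronglySorted R (l1 ++ l2) ->
  StronglySorted R l1 /\ StronglySorted R l2 /\ (forall x y, In x l1 -> In y l2 -> R x y).
Proof. induction l1 as [|a l IH]; simpl; intros H. split; [constructor|split; auto; tauto].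
 inversion H; subst. destruct (IH H2) as [A [C D]]. rewrite Forall_forall in H3.
 split; [|split]; auto. constructor; auto. rewrite Forall_forall. intros; apply H3, in_or_app; auto.
 intros x y [E|E] Hy. subst; apply H3, in_or_app; auto. auto. Qed.

Lemma SS_filter (R : nat -> nat -> Prop) f l : StronglySorted R l -> StronglySorted R (filter f l).
Proof. induction 1; simpl. constructor. destruct (f a); auto. constructor; auto.
 rewrite Forall_forall in *. intros y Hy; apply filter_In in Hy; apply H0; tauto. Qed.

Lemma SS_ext (R R' : nat -> nat -> Prop) l : StronglySorted R l ->
  (forall x y, In x l -> In y l -> R x y -> R' x y) -> StronglySorted R' l.
Proof. induction 1; intros Hx; constructor. apply IHStronglySorted; intros; apply Hx; simpl; auto.
 rewrite Forall_forall in *. intros y Hy. apply Hx; simpl; auto. Qed.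

Lemma NoDup_app_disj (l1 l2 : list nat) x : NoDup (l1 ++ l2) -> In x l1 -> ~ In x l2.
Proof. induction l1 as [|a l IH]; simpl; intros H Hx; [tauto|]. inversion H; subst.
 destruct Hx. subst. intros Hy; apply H2, in_or_app; auto. auto. Qed.

Lemma vsort_val n v m : (1 <= m <= n)%nat -> vsort n v m = v (nth (m - 1) (sorted_agents n v) 0%nat).
Proof. intros H. unfold vsort. replace ((1 <=? m) && (m <=? n))%bool with true; auto.
 symmetry; apply Bool.andb_true_iff; split; apply Nat.leb_le; lia. Qed.

Lemma vsort_out n v m : ~ (1 <= m <= n)%nat -> vsort n v m = 0.
Proof. intros H. unfold vsort. replace ((1 <=? m) && (m <=? n))%bool with false; auto.
 symmetry; apply Bool.andb_false_iff. destruct (Nat.le_gt_cases 1 m); [right|left]; apply Nat.leb_gt; lia. Qed.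

Lemma upd_ne v i u j : j <> i -> upd v i u j = v j.
Proof. unfold upd; intros H; destruct (Nat.eqb_spec j i); congruence. Qed.
Lemma upd_eq v i u : upd v i u i = u.
Proof. unfold upd; rewrite Nat.eqb_refl; auto. Qed.


Lemma lower_same n v B i u :
 (i < n)%nat ->
 (Defs.rank n v i < kstar n v B)%nat ->
 vsort n v (S (kstar n v B)) < u ->
 Bsum n v B (kstar n v B) <= u ->
 alloc n B (upd v i u) i = alloc n B v i.
Proof.
 intros hi hr hw hT.
 set (k := kstar n v B) in *.
 set (L := sorted_agents n v).
 set (L' := sorted_agents n (upd v i u)).
 destruct (sa_props n v) as [HsL [HinL HlenL]]. fold L in HsL, HinL, HlenL.
 destruct (sa_props n (upd v i u)) as [HsL' [HinL' HlenL']]. fold L' in HsL', HinL', HlenL'.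
 assert (Hkn : (k <= n)%nat) by apply kfind_le.
 set (P := firstn k L). set (Q := skipn k L).
 assert (HLPS : L = P ++ Q) by (symmetry; apply firstn_skipn).
 assert (HlenP : length P = k) by (unfold P; rewrite length_firstn; lia).
 assert (HlenS : length Q = (n - k)%nat) by (unfold Q; rewrite length_skipn; lia).
 assert (HndL : NoDup L) by (apply (SS_NoDup v); auto).
 assert (HndL' : NoDup L') by (apply (SS_NoDup (upd v i u)); auto).
 assert (HiL : In i L) by (apply HinL; auto).
 assert (HiP : In i P).
 { destruct (in_dec Nat.eq_dec i P); auto. exfalso. unfold rank in hr. fold L in hr.
   rewrite HLPS, pos_app2 in hr; auto. lia. }
 assert (HiS : ~ In i Q) by (apply (NoDup_app_disj P Q); auto; rewrite <- HLPS; auto).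
 destruct (SS_app_inv _ _ _ (eq_ind _ _ HsL _ HLPS)) as [HsP [HsS HPS]].
 set (P' := filter (fun x => if in_dec Nat.eq_dec x P then true else false) L').
 assert (HP' : forall x, In x P' <-> In x P).
 { intros x; unfold P'; rewrite filter_In. destruct (in_dec Nat.eq_dec x P); split; try tauto.
   intros _; split; auto. apply HinL', HinL. rewrite HLPS; apply in_or_app; auto.
   intros [_ H]; discriminate. }
 assert (HSne : forall y, In y Q -> y <> i) by (intros y Hy E; rewrite E in Hy; auto).
 assert (Hw : forall y, In y Q -> v y < u).
 { intros y Hy. destruct (In_nth Q y 0%nat Hy) as [j [Hj Ej]].
   assert (Hk : (S k <= n)%nat) by lia.
   rewrite vsort_val in hw by lia. replace (S k - 1)%nat with k in hw by lia.
   fold L in hw. rewrite HLPS, app_nth2 in hw by lia. rewrite HlenP, Nat.sub_diag in hw.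
   destruct j. rewrite <- Ej; auto.
   assert (HR := SS_nth _ _ 0 (S j) 0%nat HsS ltac:(lia) ltac:(lia)). rewrite Ej in HR.
   destruct HR as [HR|[HR _]]; lra. }
 assert (HL' : L' = P' ++ Q).
 { apply (SS_unique (upd v i u)); auto.
   - apply SS_app. apply SS_filter; auto.
     apply (SS_ext (Rel v)); auto. intros x y Hx Hy. unfold Rel. rewrite !upd_ne; auto.
     intros x y Hx Hy. apply HP' in Hx. destruct (Nat.eq_dec x i).
     + rewrite e. left. rewrite upd_eq, upd_ne; auto.
     + specialize (HPS x y Hx Hy). unfold Rel in *. rewrite !upd_ne; auto.
   - intros x. rewrite in_app_iff, HP', HinL'. rewrite <- HinL, HLPS, in_app_iff. tauto. }
 assert (HlenP' : length P' = k).
 { assert (length L' = (length P' + length Q)%nat) by (rewrite HL', length_app; auto). lia. }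
 assert (HpermP : Permutation P' P).
 { apply NoDup_Permutation; auto. rewrite HL' in HndL'. apply (NoDup_app_remove_r _ _ HndL').
   rewrite HLPS in HndL. apply (NoDup_app_remove_r _ _ HndL). }
 assert (HB : forall m, (k <= m)%nat -> Bsum n (upd v i u) B m = Bsum n v B m).
 { intros m Hm. rewrite !Bsum_eq. fold L L'. rewrite HL', HLPS, !firstn_app, HlenP, HlenP'.
   rewrite !firstn_all2 by lia. rewrite !sumB_app, (sumB_perm _ _ _ HpermP). rewrite (firstn_all2 P) by lia. auto. }
 assert (HV : forall m, (k < m)%nat -> vsort n (upd v i u) m = vsort n v m).
 { intros m Hm. destruct (Nat.le_gt_cases m n).
   - rewrite !vsort_val by lia. fold L L'. rewrite HL', HLPS, !app_nth2 by lia.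
     rewrite HlenP, HlenP'. rewrite upd_ne; auto. apply HSne, nth_In. lia.
   - rewrite !vsort_out by lia. auto. }
 assert (HK : kstar n (upd v i u) B = k).
 { apply kfind_char; auto.
   - right. rewrite HB by lia.
     destruct (kfind_ok n v B n) as [E|E]. change (kfind n v B n) with k in E. exfalso; lia. change (kfind n v B n) with k in E.
     rewrite vsort_val in E by lia. rewrite vsort_val by lia. fold L L' in E |- *.
     replace (nth (k - 1) L' 0%nat) with (nth (k - 1) P' 0%nat) by (rewrite HL', app_nth1; auto; lia).
     set (x := nth (k - 1) P' 0%nat).
     assert (Hx : In x P) by (apply HP', nth_In; lia).
     destruct (Nat.eq_dec x i). rewrite e, upd_eq. lra.
     rewrite upd_ne; auto. eapply Rle_trans. apply E.
     assert (Hxl : x = nth (Defs.pos x L) L 0%nat) by (symmetry; apply nth_pos; rewrite HLPS; apply in_or_app; auto).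
     assert (Hpx : (Defs.pos x L < k)%nat).
     { rewrite HLPS, pos_app; auto. rewrite <- HlenP. apply pos_lt; auto. }
     rewrite Hxl. destruct (Nat.eq_dec (Defs.pos x L) (k - 1)). rewrite e; lra.
     assert (HR := SS_nth _ _ (Defs.pos x L) (k-1) 0%nat HsL ltac:(lia) ltac:(lia)).
     destruct HR as [HR|[HR _]]; lra.
   - intros j Hj. rewrite HB, HV by lia. apply (kfind_fail n v B n). change (kfind n v B n) with k. lia. }
 unfold alloc. rewrite HK. fold k. rewrite HB, HV by lia.
 assert (Hr' : (Defs.rank n (upd v i u) i < k)%nat).
 { unfold rank. fold L'. rewrite HL', pos_app by (apply HP'; auto). rewrite <- HlenP'. apply pos_lt, HP'; auto. }
 apply Nat.ltb_lt in hr, Hr'. rewrite hr, Hr'. auto.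
Qed.


Lemma div_nonneg a b : 0 <= a -> 0 <= b -> 0 <= a / b.
Proof. intros Ha Hb. destruct (Req_dec b 0). subst. unfold Rdiv; rewrite Rinv_0; lra.
 apply Rmult_le_pos; auto. left; apply Rinv_0_lt_compat; lra. Qed.

Lemma in_firstn (x k : nat) l : In x (firstn k l) -> In x l.
Proof. intros H. rewrite <- (firstn_skipn k l). apply in_or_app; auto. Qed.

Lemma firstn_S_nth (k : nat) l : (k < length l)%nat -> firstn (S k) l = firstn k l ++ [nth k l 0%nat].
Proof. revert k; induction l as [|a l IH]; intros k H. simpl in H; lia.
 destruct k. auto. rewrite firstn_cons, IH by (simpl in H; lia). auto. Qed.

Lemma Bsum_nonneg n w B k : (forall j, (j < n)%nat -> 0 <= B j) -> 0 <= Bsum n w B k.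
Proof. intros HB. rewrite Bsum_eq. apply sumB_nonneg. intros x Hx.
 apply HB. destruct (sa_props n w) as [_ [H _]]. apply H. eapply in_firstn; eauto. Qed.

Lemma vsort_nonneg n w m : (forall j, (j < n)%nat -> 0 <= w j) -> 0 <= vsort n w m.
Proof. intros Hw. destruct (le_lt_dec 1 m); [destruct (le_lt_dec m n)|].
 rewrite vsort_val by lia. apply Hw. destruct (sa_props n w) as [_ [H H']]. apply H, nth_In. lia.
 rewrite vsort_out by lia; lra. rewrite vsort_out by lia; lra. Qed.

Lemma alloc_nonneg n B w i : (forall j, (j < n)%nat -> 0 <= w j) -> (forall j, (j < n)%nat -> 0 <= B j) ->
  0 <= B i -> 0 <= alloc n B w i.
Proof. intros Hw HB Hi. unfold alloc.
 assert (HT := Bsum_nonneg n w B (kstar n w B) HB).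
 assert (HV := vsort_nonneg n w (S (kstar n w B)) Hw).
 destruct (Rlt_dec _ _).
 - destruct (_ <? _)%nat; [apply div_nonneg|]; lra.
 - destruct (_ <? _)%nat; [apply div_nonneg; lra|]. destruct (Nat.eqb _ _); [|lra].
   set (T := Bsum _ _ _ _) in *. set (W := vsort _ _ _) in *.
   destruct (Req_dec W 0) as [E|E]. rewrite E; unfold Rdiv; rewrite Rinv_0; lra.
   assert (T / W <= 1). { apply Rmult_le_reg_r with W. lra. unfold Rdiv; rewrite Rmult_assoc, Rinv_l; lra. }
   lra.
Qed.

Lemma small_pay n B v i : (i < n)%nat -> 0 < v i -> (forall j, (j < n)%nat -> 0 <= v j) ->
  (forall j, (j < n)%nat -> 0 <= B j) ->
  ~ (Defs.rank n v i < kstar n v B)%nat -> v i * alloc n B v i <= B i.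
Proof. intros hi hvi Hw HB hr. unfold alloc.
 destruct (sa_props n v) as [HsL [HinL HlenL]].
 set (k := kstar n v B) in *. set (L := sorted_agents n v) in *.
 assert (HB0 : 0 <= B i) by auto.
 assert (Hr : (Defs.rank n v i <? k)%nat = false) by (apply Nat.ltb_ge; lia). rewrite Hr.
 destruct (Rlt_dec _ _). lra.
 destruct (Nat.eqb_spec (Defs.rank n v i) k); [|lra].
 assert (HiL : In i L) by (apply HinL; auto).
 assert (Hpk : (k < n)%nat) by (rewrite <- e; unfold rank; fold L; assert (H := pos_lt i L HiL); lia).
 assert (Hnth : nth k L 0%nat = i) by (rewrite <- e; unfold rank; fold L; apply nth_pos; auto).
 assert (HW : vsort n v (S k) = v i) by (rewrite vsort_val by lia; replace (S k - 1)%nat with k by lia; fold L; rewrite Hnth; auto).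
 assert (Hf := kfind_fail n v B n (S k) ltac:(change (kfind n v B n) with k; lia)).
 rewrite HW in Hf |- *. rewrite Bsum_eq in Hf. fold L in Hf. rewrite firstn_S_nth in Hf by lia.
 rewrite sumB_app, Hnth in Hf. unfold sumB at 2 in Hf. simpl in Hf. rewrite Bsum_eq. fold L.
 replace (v i * (1 - sumB B (firstn k L) / v i)) with (v i - sumB B (firstn k L)) by (field; lra).
 lra.
Qed.


Definition SSums (B : nat -> R) (l : list nat) : list R :=
  fold_right (fun a acc => acc ++ map (Rplus (B a)) acc) [0] l.

Lemma sumB_filter_in B f l : In (sumB B (filter f l)) (SSums B l).
Proof. induction l as [|a l IH]; simpl. auto. apply in_or_app. destruct (f a).
 right. unfold sumB; simpl. apply in_map. auto. left; auto. Qed.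

Lemma Bsum_in_SS n w B k : In (Bsum n w B k) (SSums B (seq 0 n)).
Proof. rewrite Bsum_eq. destruct (sa_props n w) as [Hs [Hin Hlen]].
 set (L := sorted_agents n w) in *.
 assert (HndL : NoDup L) by (apply (SS_NoDup w); auto).
 rewrite (sumB_perm B _ (filter (fun x => if in_dec Nat.eq_dec x (firstn k L) then true else false) (seq 0 n))).
 apply sumB_filter_in.
 apply NoDup_Permutation.
 - rewrite <- (firstn_skipn k L) in HndL. apply (NoDup_app_remove_r _ _ HndL).
 - apply NoDup_filter, seq_NoDup.
 - intros x. rewrite filter_In, in_seq. destruct (in_dec Nat.eq_dec x (firstn k L)); split; try tauto.
   intros H; split; auto. assert (x < n)%nat by (apply Hin; eapply in_firstn; eauto). lia.
   intros [_ H]; discriminate.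
Qed.

Definition Cl (n : nat) (v B : nat -> R) : list R := map v (seq 0 n) ++ SSums B (seq 0 n).

Definition SameSide (C : list R) (y m : R) : Prop :=
  forall c, In c C -> ((y < c <-> m < c) /\ (c < y <-> c < m)).

Lemma ins_ext w1 w2 j l : (forall a, In a l -> (w1 a < w1 j <-> w2 a < w2 j)) -> ins w1 j l = ins w2 j l.
Proof. induction l as [|a l IH]; simpl; intros H; auto.
 destruct (Rlt_dec (w1 a) (w1 j)), (Rlt_dec (w2 a) (w2 j)).
 auto. exfalso; apply n, H; auto. exfalso; apply n, H; auto. f_equal; apply IH; auto. Qed.

Lemma sa_ext n w1 w2 : (forall a b, (a < n)%nat -> (b < n)%nat -> (w1 a < w1 b <-> w2 a < w2 b)) ->
  sorted_agents n w1 = sorted_agents n w2.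
Proof. induction n; intros H. auto. rewrite !sa_S, IHn by (intros; apply H; lia).
 apply ins_ext. intros a Ha. destruct (sa_props n w2) as [_ [Hin _]]. apply Hin in Ha. apply H; lia. Qed.

Lemma kfind_ext n w1 w2 B m : (forall j, (j <= m)%nat -> (Bsum n w1 B j <= vsort n w1 j <-> Bsum n w2 B j <= vsort n w2 j)) ->
  kfind n w1 B m = kfind n w2 B m.
Proof. induction m; simpl; intros H; auto.
 destruct (Rle_dec _ _) as [a|a], (Rle_dec (Bsum n w2 B (S m)) _) as [b|b];
 [auto| exfalso; apply b, H; auto | exfalso; apply a, H; auto | apply IHm; intros; apply H; lia]. Qed.

Definition Fm (n : nat) (B v : nat -> R) (i : nat) (m y : R) : R :=
 let w := upd v i m in
 let L := sorted_agents n w in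
 let k := kstar n w B in
 let T := Bsum n w B k in
 let r := rank n w i in
 let wm := vsort n w (S k) in
 let wy := if ((1 <=? S k) && (S k <=? n))%bool then upd v i y (nth (S k - 1) L 0%nat) else 0 in
 if Rlt_dec wm T then (if (r <? k)%nat then B i / T else 0)
 else (if (r <? k)%nat then B i / wy else if Nat.eqb r k then 1 - T / wy else 0).

Lemma alloc_region n B v i y m : SameSide (Cl n v B) y m ->
  alloc n B (upd v i y) i = Fm n B v i m y.
Proof. intros HS.
 assert (Hv : forall a, (a < n)%nat -> SameSide [v a] y m).
 { intros a Ha c Hc. apply HS. apply in_or_app; left. destruct Hc as [<-|[]]. apply in_map, in_seq. lia. }
 assert (HBs : forall c, In c (SSums B (seq 0 n)) -> (y < c <-> m < c)).
 { intros c Hc. apply HS. apply in_or_app; auto. }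
 assert (HL : sorted_agents n (upd v i y) = sorted_agents n (upd v i m)).
 { apply sa_ext. intros a b Ha Hb. unfold upd.
   destruct (Nat.eqb_spec a i), (Nat.eqb_spec b i). lra.
   apply (Hv b Hb); simpl; auto. apply (Hv a Ha); simpl; auto. tauto. }
 assert (HB : forall k, Bsum n (upd v i y) B k = Bsum n (upd v i m) B k).
 { intros k. rewrite !Bsum_eq, HL. auto. }
 assert (HV : forall j, vsort n (upd v i y) j = if ((1 <=? j) && (j <=? n))%bool then upd v i y (nth (j - 1) (sorted_agents n (upd v i m)) 0%nat) else 0).
 { intros j. unfold vsort. rewrite HL. auto. }
 assert (Hcmp : forall j c, In c (SSums B (seq 0 n)) -> (c <= vsort n (upd v i y) j <-> c <= vsort n (upd v i m) j)
                          /\ (vsort n (upd v i y) j < c <-> vsort n (upd v i m) j < c)).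
 { intros j c Hc. rewrite HV. unfold vsort. destruct ((1 <=? j) && (j <=? n))%bool eqn:E.
   - apply Bool.andb_true_iff in E. destruct E as [_ E]. apply Nat.leb_le in E.
     set (a := nth (j - 1) (sorted_agents n (upd v i m)) 0%nat).
     unfold upd. destruct (Nat.eqb_spec a i). specialize (HBs c Hc). split; [|tauto].
     split; intros H1; apply Rnot_lt_le; intros H2; [apply HBs in H2|apply HBs in H2]; lra.
     tauto.
   - tauto. }
 assert (HK : kstar n (upd v i y) B = kstar n (upd v i m) B).
 { apply kfind_ext. intros j _. rewrite HB. apply Hcmp, Bsum_in_SS. }
 assert (Hr : rank n (upd v i y) i = rank n (upd v i m) i) by (unfold rank; rewrite HL; auto).
 unfold alloc, Fm; cbv zeta. rewrite HK, HB, Hr.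
 destruct (Hcmp (S (kstar n (upd v i m) B)) _ (Bsum_in_SS n (upd v i m) B (kstar n (upd v i m) B))) as [_ H2].
 set (k := kstar n (upd v i m) B) in *.
 destruct (Rlt_dec (vsort n (upd v i y) (S k)) _) as [h|h];
 destruct (Rlt_dec (vsort n (upd v i m) (S k)) _) as [g|g]; try (exfalso; tauto);
 try rewrite (HV (S k)); reflexivity.
Qed.

From Coquelicot Require Import Coquelicot.
Open Scope R_scope.


Lemma pw_int (f : R -> R) (C : list R) : forall a b, a <= b ->
  (forall c d, a <= c -> c < d -> d <= b -> (forall x, In x C -> ~ (c < x < d)) -> ex_RInt f c d) ->
  ex_RInt f a b.
Proof. induction C as [|x C IH]; intros a b Hab H.
 - destruct (Req_dec a b). subst. apply ex_RInt_point. apply H; try lra. intros x [].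
 - destruct (Rlt_dec a x); [destruct (Rlt_dec x b)|].
   + apply ex_RInt_Chasles with x.
     * apply IH. lra. intros c d H1 H2 H3 H4. apply H; try lra. intros z [<-|Hz]. lra. auto.
     * apply IH. lra. intros c d H1 H2 H3 H4. apply H; try lra. intros z [<-|Hz]. lra. auto.
   + apply IH; auto. intros c d H1 H2 H3 H4. apply H; auto. intros z [<-|Hz]. lra. auto.
   + apply IH; auto. intros c d H1 H2 H3 H4. apply H; auto. intros z [<-|Hz]. lra. auto.
Qed.

Lemma base_int n B v i c d : (forall j, (j < n)%nat -> 0 <= B j) -> 0 <= c -> c < d ->
  (forall x, In x (Cl n v B) -> ~ (c < x < d)) -> ex_RInt (fun u => alloc n B (upd v i u) i) c d.
Proof. intros HB0 Hc Hcd HC.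
 set (m := (c + d) / 2).
 assert (HS : forall y, c < y < d -> SameSide (Cl n v B) y m).
 { intros y Hy z Hz. specialize (HC z Hz). unfold m.
   destruct (Rle_dec z c); [|destruct (Rle_dec d z)]; [split; split; intros; lra..|].
   exfalso; apply HC; lra. }
 apply (ex_RInt_ext (Fm n B v i m)).
 { intros y Hy. rewrite Rmin_left, Rmax_right in Hy by lra. symmetry; apply alloc_region, HS; auto. }
 unfold Fm; cbv zeta.
 set (w := upd v i m).
 destruct (sa_props n w) as [HsL [HinL HlenL]].
 set (L := sorted_agents n w) in *.
 set (k := kstar n w B).
 set (T := Bsum n w B k).
 set (r := rank n w i).
 destruct ((1 <=? S k) && (S k <=? n))%bool eqn:Ec.
 2: { apply ex_RInt_const. }
 destruct (Nat.eq_dec (nth (S k - 1) L 0%nat) i) as [e|e].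
 2: { apply (ex_RInt_ext (fun _ => if Rlt_dec (vsort n w (S k)) T then (if (r <? k)%nat then B i / T else 0)
    else (if (r <? k)%nat then B i / v (nth (S k - 1) L 0%nat) else if Nat.eqb r k then 1 - T / v (nth (S k - 1) L 0%nat) else 0))).
   intros y _. rewrite upd_ne; auto. apply ex_RInt_const. }
 assert (Hkn : (S k <= n)%nat) by (apply Bool.andb_true_iff in Ec; destruct Ec as [_ Ec]; apply Nat.leb_le; auto).
 assert (Hr : r = k).
 { unfold r, rank. fold w L. rewrite <- e. replace (S k - 1)%nat with k by lia. apply pos_nth.
   apply (SS_NoDup w); auto. lia. }
 assert (Hwm : vsort n w (S k) = m).
 { rewrite vsort_val by lia. fold L. rewrite e. unfold w; apply upd_eq. }
 rewrite Hwm, Hr, Nat.ltb_irrefl, Nat.eqb_refl.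
 destruct (Rlt_dec m T) as [g|g]. apply ex_RInt_const.
 apply (ex_RInt_ext (fun y => 1 - T / y)).
 { intros y Hy. rewrite e, upd_eq. auto. }
 destruct (Req_dec c 0) as [E|E].
 - assert (HT0 : 0 <= T) by (apply Bsum_nonneg; auto).
   assert (HT : T = 0).
   { destruct (Req_dec T 0); auto. exfalso.
     set (y := Rmin d T / 2).
     assert (Hy : c < y < d) by (unfold y; rewrite E; destruct (Rle_dec d T); [rewrite Rmin_left|rewrite Rmin_right]; lra).
     assert (HyT : y < T) by (unfold y; destruct (Rle_dec d T); [rewrite Rmin_left|rewrite Rmin_right]; lra).
     destruct (HS y Hy T) as [HH _]. apply in_or_app; right. apply Bsum_in_SS.
     apply g, HH; auto. }
   apply (ex_RInt_ext (fun _ => 1)). intros y _. rewrite HT; unfold Rdiv; rewrite Rmult_0_l; lra.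
   apply ex_RInt_const.
 - apply (ex_RInt_continuous (V:=R_CompleteNormedModule)). intros z Hz. rewrite Rmin_left, Rmax_right in Hz by lra.
   apply (ex_derive_continuous (K:=R_AbsRing) (V:=R_NormedModule)). auto_derive. lra.
Qed.


Lemma in_firstn_pos x k (L : list nat) : In x L -> (Defs.pos x L < k)%nat -> In x (firstn k L).
Proof. intros H Hp. destruct (in_dec Nat.eq_dec x (firstn k L)); auto. exfalso.
 rewrite <- (firstn_skipn k L) in Hp. rewrite pos_app2 in Hp by auto.
 assert (length (firstn k L) = k \/ length (firstn k L) = length L) by (rewrite length_firstn; lia).
 destruct H0. lia. assert (length (firstn k L) + length (skipn k L) = length L)%nat by
 (rewrite <- length_app, firstn_skipn; auto).
 assert (length (skipn k L) = 0)%nat by lia. destruct (skipn k L) eqn:Es. 2: simpl in H2; lia.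
 rewrite <- (firstn_skipn k L), Es, app_nil_r in H. auto. Qed.

Theorem mainTheorem7 (n : nat) (v B : nat -> R)
  (hv : forall j, (j < n)%nat -> 0 < v j)
  (hB : forall j, (j < n)%nat -> 0 < B j)
  (i : nat) (hi : (i < n)%nat) :
  { pr : Riemann_integrable (fun u => alloc n B (upd v i u) i) 0 (v i) &
    v i * alloc n B v i - RiemannInt pr <= B i }.
Proof.
 set (f := fun u => alloc n B (upd v i u) i).
 assert (hB0 : forall j, (j < n)%nat -> 0 <= B j) by (intros j Hj; left; auto).
 assert (hvi := hv i hi).
 assert (HI : ex_RInt f 0 (v i)).
 { apply (pw_int f (Cl n v B)). lra. intros c d H1 H2 H3 H4. apply base_int; auto. }
 exists (ex_RInt_Reals_0 _ _ _ HI). rewrite <- RInt_Reals.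
 assert (Hf0 : forall u, 0 <= u -> 0 <= f u).
 { intros u Hu. apply alloc_nonneg; auto. intros j Hj. unfold upd. destruct (Nat.eqb j i); auto. left; auto. }
 assert (HR0 : forall a b, 0 <= a <= b -> b <= v i -> 0 <= RInt f a b).
 { intros a b Hab Hb. apply RInt_ge_0. lra. apply (ex_RInt_Chasles_2 (V:=R_CompleteNormedModule)) with 0. lra. apply (ex_RInt_Chasles_1 (V:=R_CompleteNormedModule)) with (v i). lra. auto.
   intros x Hx; apply Hf0; lra. }
 assert (HX0 : 0 <= alloc n B v i) by (apply alloc_nonneg; auto; intros j Hj; left; auto).
 assert (HRI := HR0 0 (v i) ltac:(lra) ltac:(lra)).
 destruct (lt_dec (Defs.rank n v i) (kstar n v B)) as [hr|hr].
 2: { assert (H := small_pay n B v i hi hvi ltac:(intros j Hj; left; auto) hB0 hr). lra. }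
 set (k := kstar n v B) in *. set (T := Bsum n v B k). set (W := vsort n v (S k)).
 set (X := alloc n B v i).
 destruct (sa_props n v) as [HsL [HinL HlenL]].
 assert (HiT : B i <= T).
 { unfold T; rewrite Bsum_eq. apply sumB_ge. intros y Hy; apply hB0, HinL. eapply in_firstn; eauto.
   apply in_firstn_pos. apply HinL; auto. exact hr. }
 assert (HBi := hB i hi).
 set (p := Rmax T W).
 assert (HpX : p * X = B i).
 { unfold X, alloc. fold k T W. apply Nat.ltb_lt in hr. rewrite hr. unfold p.
   destruct (Rlt_dec W T). rewrite Rmax_left by lra. field. lra.
   rewrite Rmax_right by lra. field. lra. }
 assert (Hp0 : 0 <= T) by lra.
 destruct (Rle_dec (v i) p).
 - assert (v i * X <= p * X) by (apply Rmult_le_compat_r; auto). lra.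
 - assert (Hp : 0 <= p) by (unfold p; apply Rle_trans with T; auto; apply Rmax_l).
   rewrite <- (RInt_Chasles (V:=R_CompleteNormedModule) f 0 p (v i)).
   2: { apply (ex_RInt_Chasles_1 (V:=R_CompleteNormedModule)) with (v i). lra. auto. }
   2: { apply (ex_RInt_Chasles_2 (V:=R_CompleteNormedModule)) with 0. lra. auto. }
   assert (HA := HR0 0 p ltac:(lra) ltac:(lra)).
   rewrite (RInt_ext (V:=R_CompleteNormedModule) f (fun _ => X) p (v i)).
   2: { intros x Hx. rewrite Rmin_left, Rmax_right in Hx by lra. unfold f, X.
        apply lower_same; auto. fold k W. assert (W <= p) by apply Rmax_r. lra.
        fold k T. assert (T <= p) by apply Rmax_l. lra. }
   rewrite (RInt_const (V:=R_CompleteNormedModule)). unfold plus, scal; simpl. unfold mult; simpl. unfold plus; simpl.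
   lra.
Qed.
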